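(* In the setting described in the context, for a given $x\in\mathcal X$, $\max_{u\in\mathcal U(x)}\min\{c_2y: y\in\mathcal Y(x,u)\}=\max_{u\in\mathcal U^*(x)\cup\mathcal V^*(x)}\min\{c_2y: y\in\mathcal Y(x,u)\}$, where $\mathcal U^*(x)=\bigcup_{\pi\in\mathcal P_\Pi}\mathcal{OU}(x,\pi)$ and $\mathcal V^*(x)=\bigcup_{\gamma\in\mathcal R_\Pi}\mathcal{OU}(x,\gamma)$.
   Context: $\mathcal X=\{x\in\mathbb Z^{m_x}_+\times\mathbb R^{n_x}_+: Ax\ge b\}$, $\mathcal U(x)=\{u\in\mathbb R^{n_u}_+: F(x)u\le h+Gx\}$ with $F(x)$ a matrix depending on $x$, $\mathcal Y(x,u)=\{y\in\mathbb R^{n_y}_+: B_2y\ge d-B_1x-Eu\}$. $\Pi=\{\pi\ge 0: B_2^\intercal\pi\le c_2^\intercal\}$, with finite sets of extreme points $\mathcal P_\Pi$ and extreme rays $\mathcal R_\Pi$. For a vector $\beta$, $\mathcal{OU}(x,\beta)$ denotes the set of optimal solutions of the linear program $\max\{(-Eu)^\intercal\beta: u\in\mathcal U(x)\}$. The optimal value of an infeasible minimization (maximization) problem is $+\infty$ ($-\infty$). Standing assumptions: (A1) $\mathcal U(x)\ne\emptyset$ for all $x\in\mathcal X$; (A2) $\mathcal U(x)$ is bounded for all $x\in\mathcal X$; (A3) $\min\{c_1x+c_2y: x\in\mathcal X,u\in\mathcal U(x),y\in\mathcal Y(x,u)\}$ has a finite optimal value. *)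

(* Defs.v *)
From HB Require Import structures.
From mathcomp Require Import all_boot all_order all_algebra.
From mathcomp Require Import all_classical all_reals.
From mathcomp Require Import ereal.
Set Implicit Arguments. Unset Strict Implicit. Unset Printing Implicit Defensive.
Import Order.TTheory GRing.Theory Num.Theory.
Local Open Scope ring_scope.
Local Open Scope classical_set_scope.

Section Defs.
Variable R : realType.

Definition mxle m n (A B : 'M[R]_(m, n)) : Prop := forall i j, A i j <= B i j.

Definition vdot n (a b : 'cV[R]_n) : R := \sum_(i < n) a i 0 * b i 0.

Definition Xset mi nc k (A : 'M[R]_(k, mi + nc)) (b : 'cV[R]_k) : set 'cV[R]_(mi + nc) :=
  [set x | mxle 0 x /\ (forall i : 'I_mi, x (lshift nc i) 0 \is a Num.int) /\ mxle b (A *m x)].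

Definition Uset nx nu p (F : 'cV[R]_nx -> 'M[R]_(p, nu)) (h : 'cV[R]_p)
  (G : 'M[R]_(p, nx)) (x : 'cV[R]_nx) : set 'cV[R]_nu :=
  [set u | mxle 0 u /\ mxle (F x *m u) (h + G *m x)].

Definition Yset nx nu ny q (B1 : 'M[R]_(q, nx)) (B2 : 'M[R]_(q, ny)) (E : 'M[R]_(q, nu))
  (d : 'cV[R]_q) (x : 'cV[R]_nx) (u : 'cV[R]_nu) : set 'cV[R]_ny :=
  [set y | mxle 0 y /\ mxle (d - B1 *m x - E *m u) (B2 *m y)].

(* Pi = {pi >= 0 : B2^T pi <= c2^T}  (c2 is stored as a column vector) *)
Definition PiSet ny q (B2 : 'M[R]_(q, ny)) (c2 : 'cV[R]_ny) : set 'cV[R]_q :=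
  [set pi | mxle 0 pi /\ mxle (B2^T *m pi) c2].

Definition reccPi ny q (B2 : 'M[R]_(q, ny)) : set 'cV[R]_q :=
  [set g | mxle 0 g /\ mxle (B2^T *m g) 0].

Definition extreme_point n (S : set 'cV[R]_n) (p : 'cV[R]_n) : Prop :=
  S p /\ forall a b t, S a -> S b -> 0 < t < 1 ->
    p = t *: a + (1 - t) *: b -> a = p /\ b = p.

Definition extreme_ray n (C : set 'cV[R]_n) (r : 'cV[R]_n) : Prop :=
  C r /\ r != 0 /\ forall a b, C a -> C b -> r = a + b ->
    exists al be : R, [/\ 0 <= al, 0 <= be, a = al *: r & b = be *: r].

Definition PPi ny q (B2 : 'M[R]_(q, ny)) (c2 : 'cV[R]_ny) : set 'cV[R]_q :=
  extreme_point (PiSet B2 c2).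
Definition RPi ny q (B2 : 'M[R]_(q, ny)) : set 'cV[R]_q :=
  extreme_ray (reccPi B2).

Definition OU nx nu p q (F : 'cV[R]_nx -> 'M[R]_(p, nu)) (h : 'cV[R]_p)
  (G : 'M[R]_(p, nx)) (E : 'M[R]_(q, nu)) (x : 'cV[R]_nx) (beta : 'cV[R]_q)
  : set 'cV[R]_nu :=
  [set u | Uset F h G x u /\
     forall u', Uset F h G x u' -> vdot (- (E *m u')) beta <= vdot (- (E *m u)) beta].

(* second-stage value  min {c2 y : y in Y(x,u)}  (+oo if infeasible) *)
Definition Qval nx nu ny q (B1 : 'M[R]_(q, nx)) (B2 : 'M[R]_(q, ny)) (E : 'M[R]_(q, nu))
  (d : 'cV[R]_q) (c2 : 'cV[R]_ny) (x : 'cV[R]_nx) (u : 'cV[R]_nu) : \bar R :=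
  ereal_inf [set (vdot c2 y)%:E | y in Yset B1 B2 E d x u].

End Defs.

(* Main.v *)
Require Import Defs.
From HB Require Import structures.
From mathcomp Require Import all_boot all_order all_algebra.
From mathcomp Require Import all_classical all_reals.
From mathcomp Require Import ereal.
From mathcomp Require Import ring lra.
Import Order.TTheory GRing.Theory Num.Theory.
Local Open Scope ring_scope.
Local Open Scope classical_set_scope.

Section LP.
Context {R : realType}.

Definition islin (V : lmodType R) (f : V -> R) :=
  forall (c : R) (u v : V), f (c *: u + v) = c * f u + f v.
Arguments islin {V}.

Section Lin.
Context {V : lmodType R}.
Implicit Types f : V -> R.

Lemma lin0 {f} : islin f -> f 0 = 0.
Proof. move=> hf; have := hf 1 0 0; rewrite scaler0 addr0 mul1r => h.
lra. Qed.

Lemma linZ {f} c u : islin f -> f (c *: u) = c * f u.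
Proof. by move=> hf; have := hf c u 0; rewrite addr0 (lin0 hf) addr0. Qed.

Lemma linD {f} u v : islin f -> f (u + v) = f u + f v.
Proof. by move=> hf; have := hf 1 u v; rewrite scale1r mul1r. Qed.

Lemma linN {f} u : islin f -> f (- u) = - f u.
Proof. by move=> hf; rewrite -scaleN1r linZ // mulN1r. Qed.

Lemma islin_comb (g h : V -> R) (k : R) : islin g -> islin h ->
  islin (fun v => g v - k * h v).
Proof. by move=> hg hh c u v; rewrite hg hh; ring. Qed.

Lemma islin0 : islin (fun _ : V => 0).
Proof. by move=> c u v; rewrite mulr0 addr0. Qed.

Lemma islinN f : islin f -> islin (fun v => - f v).
Proof. by move=> hf c u v; rewrite hf; ring. Qed.

Theorem farkas m : forall (a : nat -> V -> R) (b : V -> R),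
  (forall i, islin (a i)) -> islin b ->
  (forall v, (forall i, (i < m)%N -> 0 <= a i v) -> 0 <= b v) ->
  exists lam : nat -> R, (forall i, 0 <= lam i) /\
    forall v, b v = \sum_(i < m) lam i * a i v.
Proof.
elim: m => [|m IH] a b la lb H.
  exists (fun _ => 0); split => // v; rewrite big_ord0.
  have h1 := H v (fun i hi => ltac:(done)).
  have h2 := H (- v) (fun i hi => ltac:(done)).
  rewrite linN // in h2; lra.
case: (pselect (forall v, (forall i, (i < m)%N -> 0 <= a i v) -> 0 <= b v)) => [Hm|Hn].
  have [lam [l0 e]] := IH a b la lb Hm.
  exists (fun i => if (i < m)%N then lam i else 0); split.
    by move=> i; case: ifP.
  move=> v; rewrite big_ord_recr /= ltnn mul0r addr0 e.
  by apply: eq_bigr => i _; rewrite ltn_ord.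
move/existsNP: Hn => [x0 /not_implyP [Hx0 Hbx0]].
have bx0 : b x0 < 0 by rewrite ltNge; apply/negP.
set am := a m x0.
have am0 : am < 0.
  rewrite ltNge; apply/negP => h; apply: Hbx0; apply: H => i.
  by rewrite ltnS leq_eqVlt => /orP [/eqP ->//|]; apply: Hx0.
have amn0 : am != 0 by rewrite lt_eqF.
pose a' i v := a i v - (a i x0 / am) * a m v.
pose b' v := b v - (b x0 / am) * a m v.
have la' : forall i, islin (a' i) by move=> i; apply: islin_comb.
have lb' : islin b' by apply: islin_comb.
have H' : forall v, (forall i, (i < m)%N -> 0 <= a' i v) -> 0 <= b' v.
  move=> v hv; pose y := (- (a m v / am)) *: x0 + v.
  have ay : forall i, a i y = a' i v.
    by move=> i; rewrite /y (la i) /a'; field.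
  have amy : a m y = 0 by rewrite /y (la m) -/am; field.
  rewrite /b' -[X in _ <= X](_ : b y = _); last by rewrite /y lb; field.
  apply: H => i; rewrite ltnS leq_eqVlt => /orP [/eqP ->|hi].
    by rewrite amy.
  by rewrite ay; apply: hv.
have [mu [mu0 e]] := IH a' b' la' lb' H'.
set S2 := \sum_(i < m) mu i * a i x0.
have S20 : 0 <= S2 by apply: sumr_ge0 => i _; apply: mulr_ge0 => //; apply: Hx0.
exists (fun i => if (i < m)%N then mu i else (b x0 - S2) / am); split.
  move=> i; case: ifP => // _.
  have -> : (b x0 - S2)/am = (S2 - b x0) / (- am) by rewrite invrN mulrN -mulNr opprB.
  apply: divr_ge0; lra.
move=> v; rewrite big_ord_recr /= ltnn.
rewrite (eq_bigr (fun i : 'I_m => mu i * a i v)); last by move=> i _; rewrite ltn_ord.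
have := e v; rewrite /b' (eq_bigr (fun i : 'I_m => mu i * a i v - (mu i * a i x0) * (a m v / am))); last first.
  by move=> i _; rewrite /a'; field.
rewrite sumrB -mulr_suml -/S2 => ev.
have -> : b v = b v - b x0 / am * a m v + b x0 / am * a m v by ring.
by rewrite ev; field.
Qed.

End Lin.

Theorem farkas_aff {V : lmodType R} {m} (g : nat -> V -> R) (c : nat -> R) :
  (forall i, islin (g i)) -> ~ (exists z, forall i, (i < m)%N -> g i z <= c i) ->
  exists lam : nat -> R, [/\ (forall i, 0 <= lam i),
    (forall z, \sum_(i < m) lam i * g i z = 0) & \sum_(i < m) lam i * c i < 0].
Proof.
move=> lg infe.
pose a i (w : (V * R^o)%type) := if (i < m)%N then w.2 * c i - g i w.1 else w.2.
pose b (w : (V * R^o)%type) := - w.2.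
have la : forall i, islin (a i).
  move=> i k u v; rewrite /a; case: ifP => _ /=; last by [].
  rewrite lg; have -> : k *: u.2 = k * u.2 by []; ring.
have lb : islin b by move=> k u v; rewrite /b /=; have -> : k *: u.2 = k * u.2 by []; ring.
have H : forall w, (forall i, (i < m.+1)%N -> 0 <= a i w) -> 0 <= b w.
  move=> [z t] hw; rewrite /b /=.
  have t0 : 0 <= t by have := hw m (ltnSn m); rewrite /a ltnn.
  rewrite oppr_ge0 leNgt; apply/negP => tp; apply: infe.
  exists (t^-1 *: z) => i hi; rewrite linZ //.
  have := hw i (ltnW hi); rewrite /a hi /= subr_ge0 => h.
  by rewrite ler_pdivrMl // mulrC.
have [lam [l0 e]] := @farkas (V * R^o)%type m.+1 a b la lb H.
exists lam; split => //.
  move=> z; have := e (z, 0); rewrite /b big_ord_recr /= /a ltnn mulr0 addr0.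
  rewrite (eq_bigr (fun i : 'I_m => - (lam i * g i z))); last first.
    by move=> i _; rewrite ltn_ord /= mul0r sub0r mulrN.
  by rewrite sumrN oppr0 => /eqP; rewrite eq_sym oppr_eq0 => /eqP.
have := e (0, 1); rewrite /b big_ord_recr /= /a ltnn mulr1.
rewrite (eq_bigr (fun i : 'I_m => lam i * c i)); last first.
  by move=> i _; rewrite ltn_ord /= mul1r (lin0 (lg i)) subr0.
by move=> h; have := l0 m; lra.
Qed.


Definition fcat {T : Type} (m1 : nat) (a1 a2 : nat -> T) : nat -> T :=
  fun i => if (i < m1)%N then a1 i else a2 (i - m1)%N.

Definition ordfam {T : Type} n (F : 'I_n -> T) (d : T) (i : nat) : T :=
  if (insub i : option 'I_n) is Some j then F j else d.

Arguments ordfam {T n}.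

Lemma ordfamE {T : Type} n (F : 'I_n -> T) d (j : 'I_n) : ordfam F d j = F j.
Proof. by rewrite /ordfam valK. Qed.

Section Poly.
Context {V : lmodType R}.

Definition isPolyh (P : set V) := exists m (g : nat -> V -> R) (c : nat -> R),
  (forall i, islin (g i)) /\ forall z, P z <-> (forall i, (i < m)%N -> g i z <= c i).

Lemma poly_ext (P Q : set V) : (forall z, P z <-> Q z) -> isPolyh P -> isPolyh Q.
Proof.
move=> e [m [g [c [lg h]]]]; exists m, g, c; split => // z.
by rewrite -e.
Qed.

Lemma polyI (P Q : set V) : isPolyh P -> isPolyh Q -> isPolyh (P `&` Q).
Proof.
move=> [m1 [g1 [c1 [lg1 h1]]]] [m2 [g2 [c2 [lg2 h2]]]].
exists (m1 + m2)%N, (fcat m1 g1 g2), (fcat m1 c1 c2); split.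
  by move=> i; rewrite /fcat; case: ifP.
move=> z; split.
  move=> [/h1 hp /h2 hq] i hi; rewrite /fcat; case: ifP => him; first exact: hp.
  by apply: hq; rewrite ltn_subLR // leqNgt him.
move=> hz; split.
  by apply/h1 => i hi; have := hz i (ltn_addr _ hi); rewrite /fcat hi.
apply/h2 => i hi; have := hz (m1 + i)%N; rewrite ltn_add2l /fcat => /(_ hi).
by rewrite ltnNge leq_addr /= addKn.
Qed.

Lemma poly_half (f : V -> R) c : islin f -> isPolyh [set z | f z <= c].
Proof.
move=> lf; exists 1%N, (fun _ => f), (fun _ => c); split => // z; split.
  by move=> h i _.
by move=> h; apply: (h 0%N).
Qed.

Lemma poly_ord n (F : 'I_n -> V -> R) (c : 'I_n -> R) :
  (forall j, islin (F j)) -> isPolyh [set z | forall j, F j z <= c j].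
Proof.
move=> lF; exists n, (ordfam F (fun _ => 0)), (ordfam c 0); split.
  move=> i; rewrite /ordfam; case: insub => [j|]; [exact: lF | exact: islin0].
move=> z; split.
  move=> h i hi; have -> : i = val (Ordinal hi) by [].
  by rewrite !ordfamE; apply: h.
by move=> h j; have := h j (ltn_ord j); rewrite !ordfamE.
Qed.

Lemma attain (P : set V) (f : V -> R) : isPolyh P -> P !=set0 -> islin f ->
  (exists M, forall z, P z -> f z <= M) ->
  exists2 z, P z & forall z', P z' -> f z' <= f z.
Proof.
move=> [m [g [c [lg hP]]]] [z0 Pz0] lf [M hM].
pose E := [set f z | z in P].
have hs : has_sup E.
  split; first by exists (f z0), z0.
  by exists M => _ [z Pz <-]; apply: hM.
set s := sup E.
have ub : forall z, P z -> f z <= s.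
  by move=> z Pz; apply: sup_upper_bound => //; exists z.
pose g' := fcat m g (fun _ z => - f z).
pose c' := fcat m c (fun _ => - s).
case: (pselect (exists z, forall i, (i < m.+1)%N -> g' i z <= c' i)) => [[z hz]|infe].
  have Pz : P z.
    by apply/hP => i hi; have := hz i (ltnW hi); rewrite /g' /c' /fcat hi.
  exists z => // z' Pz'; apply: le_trans (ub _ Pz') _.
  by have := hz m (ltnSn m); rewrite /g' /c' /fcat ltnn lerN2.
have lg' : forall i, islin (g' i).
  by move=> i; rewrite /g' /fcat; case: ifP => _; [exact: lg| exact: islinN].
have [lam [l0 e1 e2]] := @farkas_aff V m.+1 g' c' lg' infe.
have cm : c' m = - s by rewrite /c' /fcat ltnn.
have gm : forall z, g' m z = - f z by move=> z; rewrite /g' /fcat ltnn.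
move: e2; rewrite big_ord_recr /= cm.
rewrite (eq_bigr (fun i : 'I_m => lam i * c i)); last first.
  by move=> i _; rewrite /c' /fcat ltn_ord.
set T := \sum_(i < m) lam i * c i => e2.
have e1' : forall z, \sum_(i < m) lam i * g i z = lam m * f z.
  move=> z; have := e1 z; rewrite big_ord_recr /= gm.
  rewrite (eq_bigr (fun i : 'I_m => lam i * g i z)); last first.
    by move=> i _; rewrite /g' /fcat ltn_ord.
  move=> h; lra.
have le1 : forall z, P z -> lam m * f z <= T.
  move=> z /hP Pz; rewrite -e1'; apply: ler_sum => i _.
  by apply: ler_wpM2l => //; apply: Pz.
have := l0 m; rewrite le_eqVlt => /orP [/eqP mu0|mup].
  by have := le1 z0 Pz0; move: e2; rewrite -mu0 !mul0r; lra.
have : s <= T / lam m.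
  apply: ge_sup; first by exists (f z0), z0.
  by move=> _ [z Pz <-]; rewrite ler_pdivlMr // mulrC; apply: le1.
rewrite ler_pdivlMr // => h; lra.
Qed.

End Poly.

Definition isface n (F P : set 'cV[R]_n) := F `<=` P /\
  forall a b t z, F z -> P a -> P b -> 0 < t < 1 -> z = t *: a + (1 - t) *: b -> F a /\ F b.

Arguments isface {n}.

Lemma face_ext n (F P : set 'cV[R]_n) z : isface F P -> extreme_point F z -> extreme_point P z.
Proof.
move=> [FP hf] [Fz hz]; split; first exact: FP.
move=> a b t Pa Pb ht e; have [Fa Fb] := hf a b t z Fz Pa Pb ht e.
exact: (hz a b t Fa Fb ht e).
Qed.

Lemma face_refl n (P : set 'cV[R]_n) : isface P P.
Proof. by split. Qed.

Lemma face_trans n (F G P : set 'cV[R]_n) : isface F G -> isface G P -> isface F P.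
Proof.
move=> [FG hF] [GP hG]; split; first by move=> z /FG /GP.
move=> a b t z Fz Pa Pb ht e; have [Ga Gb] := hG a b t z (FG _ Fz) Pa Pb ht e.
exact: hF Fz Ga Gb ht e.
Qed.

Lemma linC n (f : 'cV[R]_n -> R) t a b : islin f ->
  f (t *: a + (1 - t) *: b) = t * f a + (1 - t) * f b.
Proof. by move=> lf; rewrite lf linZ. Qed.

Lemma face_max n (P : set 'cV[R]_n) (f : 'cV[R]_n -> R) s : islin f ->
  (forall z, P z -> f z <= s) -> isface (P `&` [set z | s <= f z]) P.
Proof.
move=> lf hs; split; first by move=> z [].
move=> a b t z [Pz sz] Pa Pb /andP [t0 t1] e.
move: sz; rewrite e /= (@linC n f t a b lf) => h.
have ha := hs a Pa; have hb := hs b Pb.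
split; split => //=; nra.
Qed.

Lemma ext_exists n (P : set 'cV[R]_n) : isPolyh P -> P !=set0 ->
  (forall z, P z -> forall j, 0 <= z j 0) -> exists z, extreme_point P z.
Proof.
move=> pP neP nn.
have claim : forall k, exists F : set 'cV[R]_n, [/\ isPolyh F, F !=set0, isface F P &
   forall a b, F a -> F b -> forall j : 'I_n, (j < k)%N -> a j 0 = b j 0].
  elim=> [|k [F [pF neF fF agF]]]; first by exists P; split => //; exact: face_refl.
  case: (ltnP k n) => hk; last first.
    exists F; split => // a b Fa Fb j hj; apply: agF => //.
    by apply: leq_trans (ltn_ord j) hk.
  pose j0 := Ordinal hk.
  pose f (z : 'cV[R]_n) := - z j0 0.
  have lf : islin f by move=> c u v; rewrite /f !mxE; ring.
  have [zs Fzs hzs] : exists2 z, F z & forall z', F z' -> f z' <= f z.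
    apply: attain => //; exists 0 => z Fz; rewrite /f oppr_le0.
    by apply: nn; case: fF => FP _; apply: FP.
  exists (F `&` [set z | f zs <= f z]); split.
  - apply: polyI => //; have := poly_half (fun z => - f z) (- f zs) (islinN f lf); apply: poly_ext => z /=; by rewrite lerN2.
  - by exists zs; split => //=.
  - by apply: face_trans fF; apply: face_max.
  move=> a b [Fa ha] [Fb hb] j; rewrite ltnS leq_eqVlt => /orP [/eqP ej|hj]; last exact: agF.
  have -> : j = j0 by apply: val_inj.
  have h1 := hzs a Fa; have h2 := hzs b Fb.
  move: ha hb h1 h2; rewrite /= /f; lra.
have [F [_ [z Fz] fF agF]] := claim n.
exists z; apply: face_ext fF _; split => // a b t Fa Fb _ _.
by split; apply/matrixP => i j; rewrite (ord1 j); apply: agF.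
Qed.


Lemma ext_max n (P : set 'cV[R]_n) (f : 'cV[R]_n -> R) : isPolyh P -> P !=set0 ->
  (forall z, P z -> forall j, 0 <= z j 0) -> islin f ->
  (exists M, forall z, P z -> f z <= M) ->
  exists z, extreme_point P z /\ forall z', P z' -> f z' <= f z.
Proof.
move=> pP neP nn lf bd.
have [zs Pzs hzs] := attain P f pP neP lf bd.
pose Fc := P `&` [set z | f zs <= f z].
have pF : isPolyh Fc.
  apply: polyI => //; have := poly_half (fun z => - f z) (- f zs) (islinN f lf).
  by apply: poly_ext => z /=; rewrite lerN2.
have [z ez] : exists z, extreme_point Fc z.
  apply: ext_exists => //; first by exists zs; split => //=.
  by move=> z [Pz _]; apply: nn.
have fc : isface Fc P by apply: face_max.
exists z; split; first exact: face_ext fc ez.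
move=> z' Pz'; apply: le_trans (hzs _ Pz') _.
by case: ez => [[_ h] _].
Qed.

Lemma vdotC {n} (a b : 'cV[R]_n) : vdot a b = vdot b a.
Proof. by rewrite /vdot; apply: eq_bigr => i _; rewrite mulrC. Qed.

Lemma vdotDl {n} (a b c : 'cV[R]_n) : vdot (a + b) c = vdot a c + vdot b c.
Proof. by rewrite /vdot -big_split; apply: eq_bigr => i _; rewrite !mxE mulrDl. Qed.

Lemma vdotZl {n} k (a c : 'cV[R]_n) : vdot (k *: a) c = k * vdot a c.
Proof. by rewrite /vdot mulr_sumr; apply: eq_bigr => i _; rewrite !mxE mulrA. Qed.

Lemma vdotNl {n} (a c : 'cV[R]_n) : vdot (- a) c = - vdot a c.
Proof. by rewrite -scaleN1r vdotZl mulN1r. Qed.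

Lemma vdotBl {n} (a b c : 'cV[R]_n) : vdot (a - b) c = vdot a c - vdot b c.
Proof. by rewrite vdotDl vdotNl. Qed.

Lemma vdot0l {n} (c : 'cV[R]_n) : vdot 0 c = 0.
Proof. by rewrite /vdot big1 // => i _; rewrite mxE mul0r. Qed.

Lemma vdot_linr {n} (w : 'cV[R]_n) : islin (fun z => vdot w z).
Proof. by move=> k u v; rewrite !(vdotC w) vdotDl vdotZl. Qed.

Lemma vdot_linl {n} (w : 'cV[R]_n) : islin (fun z => vdot z w).
Proof. by move=> k u v; rewrite vdotDl vdotZl. Qed.

Lemma vdot_mul {m n} (A : 'M[R]_(m, n)) y p : vdot (A *m y) p = vdot y (A^T *m p).
Proof.
rewrite /vdot; under eq_bigr => i _ do rewrite mxE mulr_suml.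
rewrite exchange_big /=; apply: eq_bigr => j _; rewrite mxE mulr_sumr.
by apply: eq_bigr => i _; rewrite mxE; ring.
Qed.

Lemma vdot_le {n} (a b c : 'cV[R]_n) : mxle a b -> mxle 0 c -> vdot a c <= vdot b c.
Proof.
move=> hab hc; apply: ler_sum => i _; apply: ler_wpM2r; last exact: hab.
by have := hc i 0; rewrite mxE.
Qed.

Lemma vdot_self0 {n} (w : 'cV[R]_n) : vdot w w = 0 -> w = 0.
Proof.
move=> h; apply/matrixP => i j; rewrite (ord1 j) mxE.
have h0 : w i 0 * w i 0 = 0.
  apply: (@psumr_eq0P _ _ predT (fun i : 'I_n => w i 0 * w i 0) _ h i isT).
  by move=> k _; rewrite -expr2 sqr_ge0.
by move/eqP: h0; rewrite mulf_eq0 orbb => /eqP.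
Qed.

Lemma vdot_bound {n} (w u : 'cV[R]_n) M : (forall i, `|u i 0| <= M) ->
  vdot w u <= \sum_(i < n) `|w i 0| * M.
Proof.
move=> hu; apply: ler_sum => i _; apply: le_trans (ler_norm _) _.
by rewrite normrM; apply: ler_wpM2l.
Qed.

Lemma coord_lin {n} j : islin (fun z : 'cV[R]_n => z j 0).
Proof. by move=> k u v; rewrite !mxE. Qed.

Lemma mulmx_lin {m n} (A : 'M[R]_(m, n)) i : islin (fun z : 'cV[R]_n => (A *m z) i 0).
Proof. by move=> k u v; rewrite mulmxDr -scalemxAr !mxE. Qed.


Lemma fcat_l {T} m1 (a1 a2 : nat -> T) i : (i < m1)%N -> fcat m1 a1 a2 i = a1 i.
Proof. by rewrite /fcat => ->. Qed.

Lemma fcat_r {T} m1 (a1 a2 : nat -> T) i : fcat m1 a1 a2 (m1 + i)%N = a2 i.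
Proof. by rewrite /fcat ltnNge leq_addr /= addKn. Qed.

Lemma sum_fcat {T} m1 m2 (lam : nat -> R) (H : T -> R) a1 a2 :
  \sum_(i < m1 + m2) lam i * H (fcat m1 a1 a2 i) =
  \sum_(i < m1) lam i * H (a1 i) + \sum_(i < m2) lam (m1 + i)%N * H (a2 i).
Proof.
rewrite big_split_ord /=; congr (_ + _); apply: eq_bigr => i _ /=.
  by rewrite fcat_l.
by rewrite fcat_r.
Qed.

Lemma sum_ordfam {T} n (lam : nat -> R) (H : T -> R) (F : 'I_n -> T) d :
  \sum_(i < n) lam i * H (ordfam F d i) = \sum_(i < n) lam i * H (F i).
Proof. by apply: eq_bigr => i _; rewrite ordfamE. Qed.

Lemma farkas3 {V : lmodType R} n1 n2 n3 (g1 : 'I_n1 -> V -> R) (c1 : 'I_n1 -> R)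
  (g2 : 'I_n2 -> V -> R) (c2 : 'I_n2 -> R) (g3 : 'I_n3 -> V -> R) (c3 : 'I_n3 -> R) :
  (forall i, islin (g1 i)) -> (forall i, islin (g2 i)) -> (forall i, islin (g3 i)) ->
  ~ (exists z, [/\ forall i, g1 i z <= c1 i, forall i, g2 i z <= c2 i & forall i, g3 i z <= c3 i]) ->
  exists l1 l2 l3 : nat -> R, [/\ (forall i, 0 <= l1 i), (forall i, 0 <= l2 i), (forall i, 0 <= l3 i),
    (forall z, \sum_(i < n1) l1 i * g1 i z + \sum_(i < n2) l2 i * g2 i z
               + \sum_(i < n3) l3 i * g3 i z = 0) &
    \sum_(i < n1) l1 i * c1 i + \sum_(i < n2) l2 i * c2 i + \sum_(i < n3) l3 i * c3 i < 0].
Proof.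
move=> lg1 lg2 lg3 infe.
pose G := fcat n1 (ordfam g1 (fun _ => 0)) (fcat n2 (ordfam g2 (fun _ => 0)) (ordfam g3 (fun _ => 0))).
pose C := fcat n1 (ordfam c1 0) (fcat n2 (ordfam c2 0) (ordfam c3 0)).
have lG : forall i, islin (G i).
  have lo : forall n (g : 'I_n -> V -> R), (forall i, islin (g i)) -> forall i, islin (ordfam g (fun _ => 0) i).
    by move=> n g lg i; rewrite /ordfam; case: insub => [j|]; [exact: lg|exact: islin0].
  by move=> i; rewrite /G /fcat; case: ifP => _; [|case: ifP => _]; apply: lo.
have infe' : ~ (exists z, forall i, (i < n1 + (n2 + n3))%N -> G i z <= C i).
  move=> [z hz]; apply: infe; exists z; split.
  - move=> j; have := hz j (ltn_addr _ (ltn_ord j)).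
    by rewrite /G /C !fcat_l // !ordfamE.
  - move=> j; have := hz (n1 + j)%N; rewrite ltn_add2l => /(_ (ltn_addr _ (ltn_ord j))).
    by rewrite /G /C !fcat_r !fcat_l // !ordfamE.
  - move=> j; have := hz (n1 + (n2 + j))%N; rewrite !ltn_add2l => /(_ (ltn_ord j)).
    by rewrite /G /C !fcat_r !ordfamE.
have [lam [l0 e1 e2]] := @farkas_aff V _ G C lG infe'.
exists lam, (fun i => lam (n1 + i)%N), (fun i => lam (n1 + (n2 + i)))%N; split => //.
  move=> z; rewrite -[RHS](e1 z) /G (sum_fcat _ _ _ (fun t : V -> R => t z)).
  rewrite (sum_fcat _ _ (fun i => lam (n1 + i)%N) (fun t : V -> R => t z)) addrA.
  by congr (_ + _ + _); apply: eq_bigr => i _; rewrite ordfamE.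
move: e2; rewrite /C (sum_fcat _ _ _ (@id R)) (sum_fcat _ _ (fun i => lam (n1 + i)%N) (@id R)) /=.
rewrite addrA; congr (_ + _ + _ < _); apply: eq_bigr => i _; by rewrite ordfamE.
Qed.

End LP.
Arguments islin {R V}.
Arguments vdot_le {R n a b c}.

Section Main.
Context {R : realType}.

Lemma mxle_col n (a b : 'cV[R]_n) : mxle a b <-> forall i, a i 0 <= b i 0.
Proof. by split => [h i|h i j]; [apply: h|rewrite (ord1 j); apply: h]. Qed.

Lemma mxle0_col n (a : 'cV[R]_n) : mxle 0 a <-> forall i, 0 <= a i 0.
Proof. by rewrite mxle_col; split => h i; have := h i; rewrite mxE. Qed.

Lemma mxle_col0 n (a : 'cV[R]_n) : mxle a 0 <-> forall i, a i 0 <= 0.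
Proof. by rewrite mxle_col; split => h i; have := h i; rewrite mxE. Qed.

Lemma sum_vdot n (l : nat -> R) (v : 'cV[R]_n) :
  \sum_(i < n) l i * v i 0 = vdot (\col_i l i) v.
Proof. by rewrite /vdot; apply: eq_bigr => i _; rewrite mxE. Qed.

Lemma sum_vdotN n (l : nat -> R) (v : 'cV[R]_n) :
  \sum_(i < n) l i * - v i 0 = - vdot (\col_i l i) v.
Proof. by rewrite -sum_vdot -sumrN; apply: eq_bigr => i _; rewrite mulrN. Qed.

Lemma col_ge0 n (l : nat -> R) : (forall i, 0 <= l i) -> mxle 0 (\col_(i < n) l i).
Proof. by move=> h; apply/mxle0_col => i; rewrite mxE. Qed.

Lemma weak_dual ny q (B2 : 'M[R]_(q, ny)) c2 r pi y :
  mxle 0 pi -> mxle (B2^T *m pi) c2 -> mxle 0 y -> mxle r (B2 *m y) ->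
  vdot r pi <= vdot c2 y.
Proof.
move=> p0 pc y0 ry; apply: le_trans (vdot_le ry p0) _.
by rewrite vdot_mul vdotC; apply: vdot_le.
Qed.

Lemma case1 ny q (B2 : 'M[R]_(q, ny)) (r : 'cV[R]_q) :
  ~ (exists y, mxle 0 y /\ mxle r (B2 *m y)) ->
  exists g, [/\ mxle 0 g, mxle (B2^T *m g) 0 & 0 < vdot r g].
Proof.
move=> infe.
have := @farkas3 R _ ny q 0 (fun j (y : 'cV[R]_ny) => - y j 0) (fun _ => 0)
  (fun i y => - (B2 *m y) i 0) (fun i => - r i 0) (fun _ _ => 0) (fun _ => 0).
case.
- by move=> j; apply: islinN; apply: coord_lin.
- by move=> j; apply: islinN; apply: mulmx_lin.
- by move=> _; apply: islin0.
- move=> [y [h1 h2 _]]; apply: infe; exists y; split.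
    by apply/mxle0_col => j; have := h1 j; rewrite oppr_le0.
  by apply/mxle_col => i; have := h2 i; rewrite lerN2.
move=> l1 [l2 [l3 [l10 l20 _ e1 e2]]].
exists (\col_i l2 i); split; first exact: col_ge0.
  set w := \col_i l1 i + B2^T *m \col_i l2 i.
  have w0 : w = 0.
    apply: vdot_self0; have := e1 w; rewrite big_ord0 addr0 !sum_vdotN.
    rewrite (vdotC (\col_i l2 i)) vdot_mul (vdotC w (B2^T *m _)).
    rewrite {3}/w vdotDl => h; lra.
  apply/mxle_col0 => i; have := congr1 (fun M : 'cV[R]_ny => M i 0) w0.
  rewrite /w !mxE => h; have := l10 i; lra.
move: e2; rewrite big_ord0 addr0 big1; last by move=> i _; rewrite mulr0.
by rewrite sum_vdotN add0r vdotC oppr_lt0.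
Qed.


Lemma case2 ny q (B2 : 'M[R]_(q, ny)) (c2 : 'cV[R]_ny) (r : 'cV[R]_q) (y0 : 'cV[R]_ny) s :
  mxle 0 y0 -> mxle r (B2 *m y0) ->
  (forall y, mxle 0 y -> mxle r (B2 *m y) -> s <= vdot c2 y) ->
  exists pi, [/\ mxle 0 pi, mxle (B2^T *m pi) c2 & s <= vdot r pi].
Proof.
move=> y00 ry0 lb.
case: (pselect (exists pi, [/\ mxle 0 pi, mxle (B2^T *m pi) c2 & s <= vdot r pi])) => // infe.
have := @farkas3 R _ q ny 1 (fun i (p : 'cV[R]_q) => - p i 0) (fun _ => 0)
  (fun j p => (B2^T *m p) j 0) (fun j => c2 j 0) (fun _ p => - vdot r p) (fun _ => - s).
case.
- by move=> j; apply: islinN; apply: coord_lin.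
- by move=> j; apply: mulmx_lin.
- by move=> _; apply: islinN; apply: vdot_linr.
- move=> [p [h1 h2 h3]]; apply: infe; exists p; split.
  + by apply/mxle0_col => j; have := h1 j; rewrite oppr_le0.
  + by apply/mxle_col => i; apply: h2.
  + by have := h3 ord0; rewrite lerN2.
move=> l1 [l2 [l3 [l10 l20 l30 e1 e2]]].
pose av : 'cV[R]_q := \col_i l1 i; pose yv : 'cV[R]_ny := \col_j l2 j; pose t := l3 0%N.
have key : B2 *m yv = av + t *: r.
  apply/eqP; rewrite -subr_eq0; apply/eqP.
  set w := _ - _; apply: vdot_self0.
  have := e1 w; rewrite big_ord1 sum_vdotN -/av sum_vdot -/yv.
  rewrite {3}/w vdotBl vdotDl vdotZl.
  rewrite (vdotC yv) vdot_mul trmxK (vdotC (B2 *m yv)) (vdotC av) (vdotC r) -/t => h.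
  lra.
move: e2; rewrite big_ord1 big1; last by move=> i _; rewrite mulr0.
rewrite sum_vdot -/yv add0r -/t (vdotC yv) => e2.
have yv0 : mxle 0 yv by apply: col_ge0.
have t0 : 0 <= t by apply: l30.
have Bi : forall i, (B2 *m yv) i 0 = l1 i + t * r i 0.
  by move=> i; rewrite key !mxE.
case/boolP: (t == 0) => [/eqP tz|tnz].
  have cneg : vdot c2 yv < 0 by move: e2; rewrite tz mul0r; lra.
  set k := (vdot c2 y0 - s + 1) / (- vdot c2 yv).
  have ks : k * vdot c2 yv = - (vdot c2 y0 - s + 1).
    by rewrite /k; field; rewrite lt_eqF.
  have s0 : s <= vdot c2 y0 by apply: lb.
  have k0 : 0 <= k by apply: divr_ge0; lra.
  have := lb (y0 + k *: yv).
  have -> : vdot c2 (y0 + k *: yv) = vdot c2 y0 + k * vdot c2 yv.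
    by rewrite !(vdotC c2) vdotDl vdotZl.
  rewrite ks.
  have h1 : mxle 0 (y0 + k *: yv).
    apply/mxle0_col => i; rewrite !mxE.
    move/mxle0_col: y00 => /(_ i) a; move/mxle0_col: yv0 => /(_ i) b.
    by apply: addr_ge0 => //; apply: mulr_ge0.
  have h2 : mxle r (B2 *m (y0 + k *: yv)).
    apply/mxle_col => i; rewrite mulmxDr -scalemxAr.
    have -> : (B2 *m y0 + k *: (B2 *m yv)) i 0 = (B2 *m y0) i 0 + k * (B2 *m yv) i 0.
      by rewrite !mxE.
    rewrite Bi tz mul0r addr0.
    move/mxle_col: ry0 => /(_ i) a.
    have := l10 i; nra.
  move=> /(_ h1 h2); lra.
have tp : 0 < t by rewrite lt_def tnz.
have := lb (t^-1 *: yv).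
have h1 : mxle 0 (t^-1 *: yv).
  apply/mxle0_col => i; rewrite mxE; apply: mulr_ge0; first by rewrite invr_ge0.
  by move/mxle0_col: yv0.
have h2 : mxle r (B2 *m (t^-1 *: yv)).
  apply/mxle_col => i; rewrite -scalemxAr mxE Bi.
  have tn : t != 0 by rewrite gt_eqF.
  rewrite mulrDr mulrA mulVf // mul1r.
  have := l10 i => a; have : 0 <= t^-1 * l1 i by apply: mulr_ge0 => //; rewrite invr_ge0.
  lra.
move=> /(_ h1 h2); rewrite !(vdotC c2) vdotZl (vdotC yv) mulrC ler_pdivlMr //.
lra.
Qed.


Definition sumc {n} (g : 'cV[R]_n) := \sum_(i < n) g i 0.

Lemma sumc_lin {n} : islin (@sumc n).
Proof.
move=> k u v; rewrite /sumc mulr_sumr -big_split; apply: eq_bigr => i _.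
by rewrite !mxE.
Qed.

Lemma sumc_ge0 {n} (a : 'cV[R]_n) : mxle 0 a -> 0 <= sumc a.
Proof. by move/mxle0_col => h; apply: sumr_ge0 => i _. Qed.

Lemma sumc0_eq {n} (a : 'cV[R]_n) : mxle 0 a -> sumc a = 0 -> a = 0.
Proof.
move/mxle0_col => h s0; apply/matrixP => i j; rewrite (ord1 j) mxE.
by apply: (@psumr_eq0P _ _ predT (fun i : 'I_n => a i 0) _ s0 i isT) => k _.
Qed.

Lemma recc_scale {ny q} (B2 : 'M[R]_(q, ny)) k a : 0 <= k -> reccPi B2 a -> reccPi B2 (k *: a).
Proof.
move=> k0 [a0 ab]; split.
  apply/mxle0_col => i; rewrite mxE; apply: mulr_ge0 => //; by move/mxle0_col: a0.
apply/mxle_col0 => i; rewrite -scalemxAr mxE; apply: mulr_ge0_le0 => //.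
by move/mxle_col0: ab.
Qed.

Definition slice {ny q} (B2 : 'M[R]_(q, ny)) := [set g | reccPi B2 g /\ sumc g = 1].

Lemma slice_ray ny q (B2 : 'M[R]_(q, ny)) g : extreme_point (slice B2) g -> RPi B2 g.
Proof.
move=> [[Cg sg] hext]; split => //; split.
  apply/eqP => g0; move: sg; rewrite g0 /sumc big1 => [/eqP|i _]; last by rewrite mxE.
  by rewrite eq_sym oner_eq0.
move=> a b Ca Cb e.
have sab : sumc a + sumc b = 1 by rewrite -sg e linD //; apply: sumc_lin.
have sa0 := sumc_ge0 _ (proj1 Ca); have sb0 := sumc_ge0 _ (proj1 Cb).
case/boolP: (sumc a == 0) => [/eqP sa|sa].
  have a0 := sumc0_eq _ (proj1 Ca) sa.
  by exists 0, 1; split => //; rewrite ?scale0r ?scale1r // e a0 add0r.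
case/boolP: (sumc b == 0) => [/eqP sb|sb].
  have b0 := sumc0_eq _ (proj1 Cb) sb.
  by exists 1, 0; split => //; rewrite ?scale0r ?scale1r // e b0 addr0.
have sap : 0 < sumc a by rewrite lt_def sa.
have sbp : 0 < sumc b by rewrite lt_def sb.
pose a' := (sumc a)^-1 *: a; pose b' := (sumc b)^-1 *: b.
have Sa : slice B2 a'.
  split; first by apply: recc_scale => //; rewrite invr_ge0.
  by rewrite /a' linZ ?mulVf //; apply: sumc_lin.
have Sb : slice B2 b'.
  split; first by apply: recc_scale => //; rewrite invr_ge0.
  by rewrite /b' linZ ?mulVf //; apply: sumc_lin.
have e' : g = sumc a *: a' + (1 - sumc a) *: b'.
  rewrite /a' /b' !scalerA mulfV // (_ : 1 - sumc a = sumc b); last by lra.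
  by rewrite mulfV // !scale1r.
have ht : 0 < sumc a < 1 by apply/andP; split => //; lra.
have [ea eb] := hext a' b' (sumc a) Sa Sb ht e'.
exists (sumc a), (sumc b); split; [exact: ltW|exact: ltW| |].
  by rewrite -ea /a' scalerA mulfV // scale1r.
by rewrite -eb /b' scalerA mulfV // scale1r.
Qed.


Lemma polyPi {ny q} (B2 : 'M[R]_(q, ny)) c2 : isPolyh (PiSet B2 c2).
Proof.
have p1 := poly_ord _ (fun j (z : 'cV[R]_q) => - z j 0) (fun _ => 0) (fun j => islinN _ (coord_lin j)).
have p2 := poly_ord _ (fun j (z : 'cV[R]_q) => (B2^T *m z) j 0) (fun j => c2 j 0) (fun j => mulmx_lin _ j).
have := polyI _ _ p1 p2; apply: poly_ext => z /=; split.
  move=> [h1 h2]; split; last by apply/mxle_col.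
  by apply/mxle0_col => j; have := h1 j; rewrite oppr_le0.
move=> [h1 h2]; split; last by apply/mxle_col.
by move=> j; rewrite oppr_le0; move/mxle0_col: h1.
Qed.

Lemma polyU {nx nu p} (F : 'cV[R]_nx -> 'M[R]_(p, nu)) h G x : isPolyh (Uset F h G x).
Proof.
have p1 := poly_ord _ (fun j (z : 'cV[R]_nu) => - z j 0) (fun _ => 0) (fun j => islinN _ (coord_lin j)).
have p2 := poly_ord _ (fun j (z : 'cV[R]_nu) => (F x *m z) j 0) (fun j => (h + G *m x) j 0) (fun j => mulmx_lin _ j).
have := polyI _ _ p1 p2; apply: poly_ext => z /=; split.
  move=> [h1 h2]; split; last by apply/mxle_col.
  by apply/mxle0_col => j; have := h1 j; rewrite oppr_le0.
move=> [h1 h2]; split; last by apply/mxle_col.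
by move=> j; rewrite oppr_le0; move/mxle0_col: h1.
Qed.

Lemma polySlice {ny q} (B2 : 'M[R]_(q, ny)) : isPolyh (slice B2).
Proof.
have p1 := poly_ord _ (fun j (z : 'cV[R]_q) => - z j 0) (fun _ => 0) (fun j => islinN _ (coord_lin j)).
have p2 := poly_ord _ (fun j (z : 'cV[R]_q) => (B2^T *m z) j 0) (fun j => 0) (fun j => mulmx_lin _ j).
have p3 := poly_half _ 1 (@sumc_lin q).
have p4 := poly_half _ (-1) (islinN _ (@sumc_lin q)).
have := polyI _ _ (polyI _ _ p1 p2) (polyI _ _ p3 p4); apply: poly_ext => z /=; split.
  move=> [[h1 h2] [h3 h4]]; split; last by lra.
  split; last by apply/mxle_col0.
  by apply/mxle0_col => j; have := h1 j; rewrite oppr_le0.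
move=> [[h1 h2] h3]; split; last by split; lra.
split; last by apply/mxle_col0.
by move=> j; rewrite oppr_le0; move/mxle0_col: h1.
Qed.

Lemma OU_ne {nx nu p q} (F : 'cV[R]_nx -> 'M[R]_(p, nu)) h G (E : 'M[R]_(q, nu)) x beta :
  Uset F h G x !=set0 -> (exists M, forall u, Uset F h G x u -> forall i, `|u i 0| <= M) ->
  exists u, OU F h G E x beta u.
Proof.
move=> ne [M hM].
have lf : islin (fun u => vdot (- (E *m u)) beta).
  by move=> k u v; rewrite mulmxDr -scalemxAr opprD -scalerN vdotDl vdotZl.
have bd : exists M', forall u, Uset F h G x u -> vdot (- (E *m u)) beta <= M'.
  exists (\sum_(i < nu) `|(- (E^T *m beta)) i 0| * M) => u Uu.
  rewrite vdotNl vdot_mul vdotC -vdotNl; apply: vdot_bound; exact: hM.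
have [u Uu hu] := attain _ _ (polyU F h G x) ne lf bd.
by exists u; split.
Qed.

Lemma coord_le_sumc {n} (a : 'cV[R]_n) i : mxle 0 a -> a i 0 <= sumc a.
Proof.
move/mxle0_col => h; rewrite /sumc (bigD1 i) //= lerDl.
by apply: sumr_ge0 => j _.
Qed.

End Main.
Arguments weak_dual {R ny q B2 c2 r pi y}.
Arguments case1 {R ny q B2 r}.
Arguments case2 {R ny q B2 c2 r y0 s}.
Arguments slice_ray {R ny q B2 g}.

Theorem lemma4 (R : realType) (mi nc nu ny k p q : nat)
  (A : 'M[R]_(k, mi + nc)) (b : 'cV[R]_k)
  (F : 'cV[R]_(mi + nc) -> 'M[R]_(p, nu)) (h : 'cV[R]_p) (G : 'M[R]_(p, mi + nc))
  (B1 : 'M[R]_(q, mi + nc)) (B2 : 'M[R]_(q, ny)) (E : 'M[R]_(q, nu)) (d : 'cV[R]_q)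
  (c1 : 'cV[R]_(mi + nc)) (c2 : 'cV[R]_ny)
  (A1 : forall x, Xset A b x -> Uset F h G x !=set0)
  (A2 : forall x, Xset A b x -> exists M : R,
          forall u, Uset F h G x u -> forall i, `|u i 0| <= M)
  (A3 : exists v : R,
          ereal_inf [set z | exists x u y, [/\ Xset A b x, Uset F h G x u,
                     Yset B1 B2 E d x u y & z = (vdot c1 x + vdot c2 y)%:E]]
          = v%:E)
  (x : 'cV[R]_(mi + nc)) (hx : Xset A b x) :
  ereal_sup [set Qval B1 B2 E d c2 x u | u in Uset F h G x] =
  ereal_sup [set Qval B1 B2 E d c2 x u | u in
     (\bigcup_(pi in PPi B2 c2) OU F h G E x pi) `|`
     (\bigcup_(g in RPi B2) OU F h G E x g)].
Proof.
pose r u := d - B1 *m x - E *m u.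
have OUne : forall beta, exists u, OU F h G E x beta u.
  by move=> beta; apply: OU_ne; [exact: A1 | exact: A2].
have Qlb : forall pi u, PiSet B2 c2 pi -> ((vdot (r u) pi)%:E <= Qval B1 B2 E d c2 x u)%E.
  move=> pi u [p0 pc]; apply: le_ereal_inf_tmp => _ [y [y0 ry] <-].
  by rewrite lee_fin; apply: weak_dual ry.
have mono : forall beta u u0, OU F h G E x beta u -> Uset F h G x u0 ->
    vdot (r u0) beta <= vdot (r u) beta.
  by move=> beta u u0 [_ hu] Uu0; rewrite /r !vdotDl lerD2l; apply: hu.
apply/eqP; rewrite eq_le; apply/andP; split; last first.
  apply: ereal_sup_le => _ [u Su <-]; exists u => //.
  by case: Su => [[pi _ [hu _]]|[g _ [hu _]]].
apply: ge_ereal_sup => _ [u0 Uu0 <-].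
case: (pselect (exists y, mxle 0 y /\ mxle (r u0) (B2 *m y))) => [[y0 [y00 ry0]]|nY].
  case eQ: (Qval B1 B2 E d c2 x u0) => [s| |]; last by rewrite leNye.
    have lb : forall y, mxle 0 y -> mxle (r u0) (B2 *m y) -> s <= vdot c2 y.
      move=> y ya yb; rewrite -lee_fin -eQ; apply: ereal_inf_lbound.
      by exists y.
    have [pi [p0 pc sp]] := case2 y00 ry0 lb.
    have [pi' [ext hmax]] : exists z, extreme_point (PiSet B2 c2) z /\
        forall z', PiSet B2 c2 z' -> vdot (r u0) z' <= vdot (r u0) z.
      apply: ext_max; first exact: polyPi.
      - by exists pi.
      - by move=> z [z0 _]; apply/mxle0_col.
      - exact: vdot_linr.
      by exists (vdot c2 y0) => z [z0 zc]; apply: weak_dual ry0.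
    have [u hu] := OUne pi'.
    apply: (@le_trans _ _ (vdot (r u) pi')%:E).
      rewrite lee_fin; apply: le_trans sp _; apply: le_trans (hmax _ (conj p0 pc)) _.
      exact: mono.
    apply: le_trans (Qlb pi' u ext.1) _; apply: ereal_sup_ubound.
    by exists u => //; left; exists pi'.
  have := @ereal_inf_lbound _ [set (vdot c2 y)%:E | y in Yset B1 B2 E d x u0] (vdot c2 y0)%:E.
  by rewrite -/(Qval B1 B2 E d c2 x u0) eQ leye_eq => /(_ (ex_intro2 _ _ y0 (conj y00 ry0) erefl)).
have [g [g0 gB gr]] := case1 nY.
set sg := sumc g.
have sgp : 0 < sg.
  rewrite lt_def sumc_ge0 // andbT; apply/eqP => s0.
  by move: gr; rewrite (sumc0_eq _ g0 s0) vdotC vdot0l ltxx.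
have [g' [ext hmax]] : exists z, extreme_point (slice B2) z /\
    forall z', slice B2 z' -> vdot (r u0) z' <= vdot (r u0) z.
  apply: ext_max; first exact: polySlice.
  - exists (sg^-1 *: g); split; first by apply: recc_scale => //; rewrite invr_ge0 ltW.
    by rewrite linZ ?mulVf ?gt_eqF //; apply: sumc_lin.
  - by move=> z [[z0 _] _]; apply/mxle0_col.
  - exact: vdot_linr.
  exists (\sum_(i < q) `|r u0 i 0| * 1) => z [[z0 _] sz]; apply: vdot_bound => i.
  rewrite ger0_norm; last by move/mxle0_col: z0.
  by rewrite -sz; apply: coord_le_sumc.
have pos : 0 < vdot (r u0) g'.
  apply: lt_le_trans (hmax (sg^-1 *: g) _).
    by rewrite vdotC vdotZl vdotC; apply: mulr_gt0 => //; rewrite invr_gt0.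
  split; first by apply: recc_scale => //; rewrite invr_ge0 ltW.
  by rewrite linZ ?mulVf ?gt_eqF //; apply: sumc_lin.
have ray := slice_ray ext.
have [u hu] := OUne g'.
have Qu : Qval B1 B2 E d c2 x u = +oo%E.
  rewrite /Qval (_ : [set _ | _ in _] = set0) ?ereal_inf0 //.
  apply/seteqP; split => // _ [y [y0 ry] _] /=.
  have h1 := mono g' u u0 hu Uu0.
  have h2 := vdot_le ry (proj1 ext.1.1).
  have h3 : vdot (B2 *m y) g' <= 0.
    rewrite vdot_mul vdotC; apply: le_trans (vdot_le (proj2 ext.1.1) y0) _.
    by rewrite vdot0l.
  rewrite /r in h1 pos; lra.
have : (+oo <= ereal_sup [set Qval B1 B2 E d c2 x u | u in
     (\bigcup_(pi in PPi B2 c2) OU F h G E x pi) `|`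
     (\bigcup_(g in RPi B2) OU F h G E x g)])%E.
  by apply: ereal_sup_ubound; exists u => //; right; exists g'.
by move=> h'; apply: le_trans (leey _) h'.
Qed.
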